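(* Let $M:=\mathbb R^2\setminus\{(0,0)\}$ and let $\varphi:M\to M$ be the homeomorphism $$\varphi(x,y)=\begin{cases}\big(x,\,(1-\tfrac{e^{-1/x}}{x})(2y-x)+e^{-1/x}\big)&\text{if }0\le\tfrac12x\le y\le x,\\ \big(x,\,\tfrac{2e^{-1/x}}{x}\,y\big)&\text{if }0\le y\le\tfrac12x,\\ (x,y)&\text{if }y\le0\text{ or }x\le y.\end{cases}$$ Then $\varphi$ does not extend to a homeomorphism $\beta_s^*M\to\beta_s^*M$.
   Context: $\mathcal S^*(M)$ is the ring of bounded continuous semialgebraic functions on $M$; $\beta_s^*M$ is the set of its maximal ideals with the Zariski topology (compact Hausdorff), and $M$ is identified with a dense subspace via $a\mapsto\{f\in\mathcal S^*(M):f(a)=0\}$. ''Extends'' means a homeomorphism of $\beta_s^*M$ whose restriction to $M$ is $\varphi$. *)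

(* Defs.v *)
From Stdlib Require Import Reals.
Open Scope R_scope.

Inductive rpoly : Type :=
| PVar : nat -> rpoly
| PConst : R -> rpoly
| PAdd : rpoly -> rpoly -> rpoly
| PMul : rpoly -> rpoly -> rpoly
| POpp : rpoly -> rpoly.

Fixpoint peval (env : nat -> R) (p : rpoly) : R :=
  match p with
  | PVar i => env i
  | PConst c => c
  | PAdd p q => peval env p + peval env q
  | PMul p q => peval env p * peval env q
  | POpp p => - peval env p
  end.

(** Quantifier-free sign conditions: semialgebraic sets are exactly the
    finite boolean combinations of sets {p > 0} and {p = 0}. *)
Inductive sa_formula : Type :=
| FPos : rpoly -> sa_formula
| FZero : rpoly -> sa_formula
| FAnd : sa_formula -> sa_formula -> sa_formula
| FOr : sa_formula -> sa_formula -> sa_formula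
| FNot : sa_formula -> sa_formula.

Fixpoint fholds (env : nat -> R) (F : sa_formula) : Prop :=
  match F with
  | FPos p => 0 < peval env p
  | FZero p => peval env p = 0
  | FAnd F G => fholds env F /\ fholds env G
  | FOr F G => fholds env F \/ fholds env G
  | FNot F => ~ fholds env F
  end.

Definition env3 (x y z : R) : nat -> R :=
  fun i => match i with 0%nat => x | 1%nat => y | 2%nat => z | _ => 0 end.

Definition semialgebraic3 (S : R -> R -> R -> Prop) : Prop :=
  exists F : sa_formula, forall x y z, fholds (env3 x y z) F <-> S x y z.

Definition inM (p : R * R) : Prop := p <> (0, 0).

(** Bounded continuous semialgebraic functions on M (values off M irrelevant). *)
Definition sa_bounded (f : R * R -> R) : Prop :=
  exists B, forall p, inM p -> Rabs (f p) <= B.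

Definition sa_continuous (f : R * R -> R) : Prop :=
  forall p, inM p -> forall eps, 0 < eps -> exists delta, 0 < delta /\
    forall q, inM q ->
      (fst q - fst p)^2 + (snd q - snd p)^2 < delta^2 ->
      Rabs (f q - f p) < eps.

Definition sa_function (f : R * R -> R) : Prop :=
  semialgebraic3 (fun x y z => inM (x, y) /\ z = f (x, y)).

Definition is_Sstar (f : R * R -> R) : Prop :=
  sa_bounded f /\ sa_continuous f /\ sa_function f.

(** The ring S^*(M) (elements considered via their values on M). *)
Definition SM : Type := { f : R * R -> R | is_Sstar f }.

Definition ev (f : SM) (p : R * R) : R := proj1_sig f p.

Definition is_ideal (I : SM -> Prop) : Prop :=
  (forall z : SM, (forall p, inM p -> ev z p = 0) -> I z) /\
  (forall f g h : SM, I f -> I g ->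
     (forall p, inM p -> ev h p = ev f p + ev g p) -> I h) /\
  (forall f g h : SM, I f ->
     (forall p, inM p -> ev h p = ev g p * ev f p) -> I h).

Definition is_proper (I : SM -> Prop) : Prop :=
  forall u : SM, (forall p, inM p -> ev u p = 1) -> ~ I u.

Definition is_maximal_ideal (I : SM -> Prop) : Prop :=
  is_ideal I /\ is_proper I /\
  forall J : SM -> Prop, is_ideal J -> is_proper J ->
    (forall f, I f -> J f) -> forall f, J f -> I f.

(** beta_s^* M : maximal spectrum of S^*(M). *)
Definition betaM : Type := { I : SM -> Prop | is_maximal_ideal I }.

Definition mem (m : betaM) (f : SM) : Prop := proj1_sig m f.

(** Zariski topology: basic open sets D(f) = {m | f not in m}. *)
Definition Dset (f : SM) (m : betaM) : Prop := ~ mem m f.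

Definition zar_open (U : betaM -> Prop) : Prop :=
  forall m, U m -> exists f, Dset f m /\ forall m', Dset f m' -> U m'.

Definition zar_continuous (F : betaM -> betaM) : Prop :=
  forall U, zar_open U -> zar_open (fun m => U (F m)).

Definition zar_homeomorphism (F : betaM -> betaM) : Prop :=
  exists G : betaM -> betaM,
    (forall m, G (F m) = m) /\ (forall m, F (G m) = m) /\
    zar_continuous F /\ zar_continuous G.

Definition phi (p : R * R) : R * R :=
  let (x, y) := p in
  if Rle_dec y 0 then (x, y)
  else if Rle_dec x y then (x, y)
  else if Rle_dec y (x / 2) then (x, 2 * exp (- / x) / x * y)
  else (x, (1 - exp (- / x) / x) * (2 * y - x) + exp (- / x)).

(** F extends phi: F maps the maximal ideal m_a = {f | f(a) = 0} of a point
    a in M to m_{phi(a)}. *)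
Definition extends_phi (F : betaM -> betaM) : Prop :=
  forall a, inM a -> forall m : betaM,
    (forall f, mem m f <-> ev f a = 0) ->
    forall f, mem (F m) f <-> ev f (phi a) = 0.

(* Main.v *)
Require Import Defs.
From Stdlib Require Import Reals Lra Lia Psatz List Ranalysis5 Classical FunctionalExtensionality PropExtensionality ProofIrrelevance.
From Coquelicot Require Import Coquelicot.
Open Scope R_scope.

Fixpoint evl (l : list R) (x : R) : R :=
  match l with nil => 0 | a :: l' => a + x * evl l' x end.
Fixpoint addl (p q : list R) : list R :=
  match p, q with
  | nil, _ => q | _, nil => p
  | a :: p', b :: q' => (a + b) :: addl p' q' end.
Fixpoint mull (p q : list R) : list R :=
  match p with nil => nil
  | a :: p' => addl (map (Rmult a) q) (0 :: mull p' q) end.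

Lemma evl_add p q x : evl (addl p q) x = evl p x + evl q x.
Proof. revert q; induction p as [|a p IH]; intros [|b q]; simpl; try ring.
  rewrite IH; ring. Qed.
Lemma evl_scale a q x : evl (map (Rmult a) q) x = a * evl q x.
Proof. induction q; simpl; [ring| rewrite IHq; ring]. Qed.
Lemma evl_mul p q x : evl (mull p q) x = evl p x * evl q x.
Proof. induction p as [|a p IH]; simpl; [ring|].
  rewrite evl_add, evl_scale; simpl; rewrite IH; ring. Qed.

Fixpoint evb (L : list (list R)) (x y : R) : R :=
  match L with nil => 0 | l :: L' => evl l x + y * evb L' x y end.
Fixpoint addb (P Q : list (list R)) : list (list R) :=
  match P, Q with
  | nil, _ => Q | _, nil => P
  | a :: P', b :: Q' => addl a b :: addb P' Q' end.
Fixpoint mulb (P Q : list (list R)) : list (list R) :=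
  match P with nil => nil
  | a :: P' => addb (map (mull a) Q) (nil :: mulb P' Q) end.

Lemma evb_add p q x y : evb (addb p q) x y = evb p x y + evb q x y.
Proof. revert q; induction p as [|a p IH]; intros [|b q]; simpl; try ring.
  rewrite IH, evl_add; ring. Qed.
Lemma evb_scale a q x y : evb (map (mull a) q) x y = evl a x * evb q x y.
Proof. induction q; simpl; [ring| rewrite IHq, evl_mul; ring]. Qed.
Lemma evb_mul p q x y : evb (mulb p q) x y = evb p x y * evb q x y.
Proof. induction p as [|a p IH]; simpl; [ring|].
  rewrite evb_add, evb_scale; simpl; rewrite IH; ring. Qed.

Definition tob_var (c : R) (i : nat) : list (list R) :=
  match i with
  | 0%nat => (0 :: 1 :: nil) :: nil
  | 1%nat => nil :: (1 :: nil) :: nil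
  | 2%nat => (c :: nil) :: nil
  | _ => nil end.

Fixpoint tob (c : R) (P : rpoly) : list (list R) :=
  match P with
  | PVar i => tob_var c i
  | PConst r => (r :: nil) :: nil
  | PAdd p q => addb (tob c p) (tob c q)
  | PMul p q => mulb (tob c p) (tob c q)
  | POpp p => mulb (((-1) :: nil) :: nil) (tob c p)
  end.

Lemma tob_ok c P x y : peval (env3 x y c) P = evb (tob c P) x y.
Proof.
  induction P; cbn [peval tob].
  - destruct n as [|[|[|n]]]; simpl; ring.
  - simpl; ring.
  - rewrite evb_add, IHP1, IHP2; ring.
  - rewrite evb_mul, IHP1, IHP2; ring.
  - rewrite evb_mul, IHP; simpl; ring.
Qed.

Lemma exp_nmul n u : exp (INR n * u) = exp u ^ n.
Proof. induction n. - simpl. rewrite Rmult_0_l, exp_0; ring.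
  - rewrite S_INR, Rmult_plus_distr_r, Rmult_1_l, exp_plus, IHn; simpl; ring. Qed.

Lemma exp_lower n t : 0 < t -> (t / INR (S n)) ^ (S n) <= exp t.
Proof. intros Ht. assert (HN : 0 < INR (S n)) by (apply lt_0_INR; lia).
  replace t with (INR (S n) * (t / INR (S n))) at 2 by (field; lra).
  rewrite exp_nmul. apply pow_incr. split.
  - apply Rlt_le, Rdiv_lt_0_compat; lra.
  - assert (H := exp_ineq1 (t / INR (S n))).
    assert (0 < t / INR (S n)) by (apply Rdiv_lt_0_compat; lra).
    assert (H1 := H ltac:(lra)). lra.
Qed.

Lemma flat k K m : 0 < k -> 0 <= K ->
  exists d, 0 < d /\ forall x, 0 < x < d -> K * exp (- / x) < k * x ^ m.
Proof.
  intros Hk HK. set (N := INR (S m)). assert (HN : 0 < N) by (apply lt_0_INR; lia).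
  assert (HNp : 0 < N ^ S m) by (apply pow_lt; lra).
  exists (k / (K * N ^ S m + 1)). split.
  { apply Rdiv_lt_0_compat; nra. }
  intros x [Hx Hxd].
  assert (Hxm : 0 < x ^ m) by (apply pow_lt; lra).
  assert (Hl := exp_lower m (/ x) ltac:(apply Rinv_0_lt_compat; lra)).
  fold N in Hl.
  assert (E1 : (/ x / N) ^ S m = / (N * x) ^ S m).
  { rewrite <- pow_inv. f_equal. field. split; lra. }
  rewrite E1 in Hl.
  assert (Hpos : 0 < (N * x) ^ S m) by (apply pow_lt; nra).
  assert (Hexp : exp (- / x) <= (N * x) ^ S m).
  { rewrite exp_Ropp. rewrite <- (Rinv_inv ((N*x)^S m)).
    apply Rinv_le_contravar; [apply Rinv_0_lt_compat; lra| exact Hl]. }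
  assert (E2 : (N * x) ^ S m = N ^ S m * x * x ^ m).
  { rewrite Rpow_mult_distr. simpl. ring. }
  rewrite E2 in Hexp.
  assert (Hd : x * (K * N ^ S m + 1) < k).
  { apply (Rmult_lt_compat_r (K * N ^ S m + 1)) in Hxd; [|nra].
    unfold Rdiv in Hxd. rewrite Rmult_assoc, Rinv_l in Hxd; nra. }
  assert (K * exp (- / x) <= K * (N ^ S m * x * x ^ m)) by (apply Rmult_le_compat_l; lra).
  assert (K * (N ^ S m * x * x ^ m) < k * x ^ m).
  { apply Rle_lt_trans with ((x * (K * N ^ S m + 1) - x) * x ^ m). nra. nra. }
  lra.
Qed.

Fixpoint sabs (l : list R) : R := match l with nil => 0 | a :: l => Rabs a + sabs l end.
Lemma sabs_nn l : 0 <= sabs l.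
Proof. induction l; simpl; [lra|]. pose proof (Rabs_pos a); lra. Qed.
Lemma evl_bound l x : Rabs x <= 1 -> Rabs (evl l x) <= sabs l.
Proof. intros Hx. induction l; simpl. - rewrite Rabs_R0; lra.
  - eapply Rle_trans; [apply Rabs_triang|]. rewrite Rabs_mult.
    pose proof (Rabs_pos x). pose proof (Rabs_pos (evl l x)). nra. Qed.

Lemma tame l : exists d, 0 < d /\
  ((forall x, 0 < x < d -> evl l x = 0) \/
   exists k m, 0 < k /\ forall x, 0 < x < d -> k * x ^ m <= Rabs (evl l x)).
Proof.
  induction l as [|a l IH].
  - exists 1. split; [lra|]. left; intros; reflexivity.
  - destruct (Req_dec a 0) as [Ha|Ha].
    + subst a. destruct IH as [d [Hd [H|[k [m [Hk H]]]]]].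
      * exists d; split; [lra|]. left. intros x Hx. simpl. rewrite H; auto; ring.
      * exists d; split; [lra|]. right. exists k, (S m). split; [lra|].
        intros x Hx. simpl. rewrite Rplus_0_l, Rabs_mult, Rabs_pos_eq by lra.
        specialize (H x Hx). nra.
    + assert (Haa : 0 < Rabs a) by (apply Rabs_pos_lt; auto).
      pose proof (sabs_nn l) as HK.
      exists (Rmin 1 (Rabs a / (2 * (sabs l + 1)))). split.
      { apply Rmin_glb_lt; [lra|]. apply Rdiv_lt_0_compat; lra. }
      right. exists (Rabs a / 2), 0%nat. split; [lra|].
      intros x [Hx1 Hx2]. simpl. rewrite Rmult_1_r.
      assert (Hx3 : x <= 1) by (eapply Rle_trans; [left; apply Hx2| apply Rmin_l]).
      assert (Hx4 : x <= Rabs a / (2 * (sabs l + 1))) by (eapply Rle_trans; [left; apply Hx2| apply Rmin_r]).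
      assert (Hb := evl_bound l x ltac:(rewrite Rabs_pos_eq; lra)).
      assert (Hx5 : x * (2 * (sabs l + 1)) <= Rabs a).
      { apply (Rmult_le_compat_r (2 * (sabs l + 1))) in Hx4; [|lra].
        unfold Rdiv in Hx4. rewrite Rmult_assoc, Rinv_l in Hx4; lra. }
      assert (Rabs (x * evl l x) <= x * sabs l).
      { rewrite Rabs_mult, Rabs_pos_eq by lra. apply Rmult_le_compat_l; lra. }
      pose proof (Rabs_triang_inv a (- (x * evl l x))).
      rewrite Rabs_Ropp in H0. replace (a - - (x * evl l x)) with (a + x * evl l x) in H0 by ring.
      nra.
Qed.

Definition E (x : R) := exp (- / x).
Lemma E_pos x : 0 < E x. Proof. apply exp_pos. Qed.
Lemma E_le1 x : 0 < x -> E x <= 1.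
Proof. intros. unfold E. rewrite <- exp_0. left. apply exp_increasing.
  assert (0 < / x) by (apply Rinv_0_lt_compat; lra). lra. Qed.

Fixpoint sbabs (L : list (list R)) : R := match L with nil => 0 | l :: L => sabs l + sbabs L end.
Lemma sbabs_nn L : 0 <= sbabs L.
Proof. induction L; simpl; [lra|]. pose proof (sabs_nn a); lra. Qed.
Lemma evb_bound L x y : Rabs x <= 1 -> Rabs y <= 1 -> Rabs (evb L x y) <= sbabs L.
Proof. intros Hx Hy. induction L; simpl. - rewrite Rabs_R0; lra.
  - eapply Rle_trans; [apply Rabs_triang|]. rewrite Rabs_mult.
    pose proof (evl_bound a x Hx).
    pose proof (Rabs_pos y). pose proof (Rabs_pos (evb L x y)). nra. Qed.

Lemma bivar L : exists d, 0 < d /\ forall x, 0 < x < d ->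
  (forall y, 0 <= y <= E x -> evb L x y = 0) \/ (forall y, 0 < y <= E x -> evb L x y <> 0).
Proof.
  induction L as [|l L IH].
  - exists 1; split; [lra|]. intros; left; intros; reflexivity.
  - destruct (tame l) as [d1 [Hd1 [H1|[k [m [Hk H1]]]]]].
    + destruct IH as [d2 [Hd2 H2]]. exists (Rmin d1 d2). split; [apply Rmin_glb_lt; lra|].
      intros x [Hx Hxd]. assert (x < d1) by (eapply Rlt_le_trans; [apply Hxd|apply Rmin_l]).
      assert (x < d2) by (eapply Rlt_le_trans; [apply Hxd|apply Rmin_r]).
      simpl. rewrite H1 by lra. destruct (H2 x ltac:(lra)) as [HZ|HZ].
      * left. intros y Hy. rewrite HZ; auto; ring.
      * right. intros y Hy. specialize (HZ y Hy). intro HH. apply HZ.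
        assert (HY : y * evb L x y = 0) by lra. apply Rmult_integral in HY. destruct HY; auto; lra.
    + pose proof (sbabs_nn L) as HK.
      destruct (flat k (sbabs L) m Hk HK) as [d2 [Hd2 H2]].
      exists (Rmin 1 (Rmin d1 d2)). split. { repeat apply Rmin_glb_lt; lra. }
      intros x [Hx Hxd].
      assert (x <= 1) by (left; eapply Rlt_le_trans; [apply Hxd|apply Rmin_l]).
      assert (Hm : Rmin d1 d2 <= d1 /\ Rmin d1 d2 <= d2) by (split; [apply Rmin_l|apply Rmin_r]).
      assert (Rmin 1 (Rmin d1 d2) <= Rmin d1 d2) by apply Rmin_r.
      right. intros y [Hy1 Hy2]. simpl.
      pose proof (E_le1 x Hx).
      assert (Hb := evb_bound L x y ltac:(rewrite Rabs_pos_eq; lra) ltac:(rewrite Rabs_pos_eq; lra)).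
      specialize (H1 x ltac:(lra)). specialize (H2 x ltac:(lra)). fold (E x) in H2.
      assert (Rabs (y * evb L x y) <= E x * sbabs L).
      { rewrite Rabs_mult, Rabs_pos_eq by lra. pose proof (Rabs_pos (evb L x y)). nra. }
      intro HH. assert (HE : evl l x = - (y * evb L x y)) by lra.
      rewrite HE, Rabs_Ropp in H1. nra.
Qed.

Fixpoint atoms (F : sa_formula) : list rpoly :=
  match F with
  | FPos p => p :: nil | FZero p => p :: nil
  | FAnd F G => atoms F ++ atoms G | FOr F G => atoms F ++ atoms G
  | FNot F => atoms F end.

Definition same_sign (a b : R) := (0 < a <-> 0 < b) /\ (a = 0 <-> b = 0).

Lemma fholds_atoms F e e' :
  (forall P, In P (atoms F) -> same_sign (peval e P) (peval e' P)) ->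
  (fholds e F <-> fholds e' F).
Proof.
  induction F; simpl; intros H.
  - apply (H r); auto.
  - apply (H r); auto.
  - rewrite IHF1, IHF2; [tauto| |]; intros; apply H; apply in_or_app; auto.
  - rewrite IHF1, IHF2; [tauto| |]; intros; apply H; apply in_or_app; auto.
  - rewrite IHF; tauto.
Qed.

Lemma peval_cont (env : R -> nat -> R) P :
  (forall i, continuity (fun t => env t i)) -> continuity (fun t => peval (env t) P).
Proof.
  intros H. induction P; simpl.
  - apply H.
  - apply continuity_const. intros a b; reflexivity.
  - apply continuity_plus; auto.
  - apply continuity_mult; auto.
  - apply continuity_opp; auto.
Qed.

Lemma env3_cont_x y c i : continuity (fun t => env3 t y c i).
Proof. destruct i as [|[|[|i]]]; unfold env3; try (apply continuity_const; intros a b; reflexivity);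
  apply derivable_continuous, derivable_id. Qed.
Lemma env3_cont_y x c i : continuity (fun t => env3 x t c i).
Proof. destruct i as [|[|[|i]]]; unfold env3; try (apply continuity_const; intros a b; reflexivity);
  apply derivable_continuous, derivable_id. Qed.

Lemma sign_const (f : R -> R) a b : a <= b ->
  (forall t, a <= t <= b -> continuity_pt f t) ->
  (forall t, a <= t <= b -> f t <> 0) -> same_sign (f a) (f b).
Proof.
  intros Hab Hc Hn. destruct (Req_dec a b) as [->|Hne].
  { split; tauto. }
  assert (Hlt : a < b) by lra.
  assert (Ha := Hn a ltac:(lra)). assert (Hb := Hn b ltac:(lra)).
  split; [|split; intros; contradiction].
  split; intros Hp.
  - destruct (Rlt_or_le 0 (f b)) as [|Hq]; auto. exfalso.
    destruct (IVT_interv (fun t => - f t) a b) as [z [Hz1 Hz2]]; auto.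
    + intros t Ht. apply continuity_pt_opp. auto.
    + lra.
    + assert (f b <> 0) by auto. lra.
    + apply (Hn z Hz1). lra.
  - destruct (Rlt_or_le 0 (f a)) as [|Hq]; auto. exfalso.
    destruct (IVT_interv f a b) as [z [Hz1 Hz2]]; auto.
    + assert (f a <> 0) by auto. lra.
    + apply (Hn z Hz1). lra.
Qed.

Lemma evb_y0 L x : evb L x 0 = evl (hd nil L) x.
Proof. destruct L; simpl; ring. Qed.

Lemma uni_tame P c : exists d, 0 < d /\
  ((forall x, 0 < x < d -> peval (env3 x 0 c) P = 0) \/
   (forall x, 0 < x < d -> peval (env3 x 0 c) P <> 0)).
Proof.
  destruct (tame (hd nil (tob c P))) as [d [Hd [H|[k [m [Hk H]]]]]].
  - exists d; split; auto. left. intros x Hx. rewrite tob_ok, evb_y0; auto.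
  - exists d; split; auto. right. intros x Hx. rewrite tob_ok, evb_y0.
    specialize (H x Hx). intro HH. rewrite HH, Rabs_R0 in H.
    assert (0 < x ^ m) by (apply pow_lt; lra). nra.
Qed.

Lemma bi_tame P c : exists d, 0 < d /\ forall x, 0 < x < d ->
  (forall y, 0 <= y <= E x -> peval (env3 x y c) P = 0) \/
  (forall y, 0 < y <= E x -> peval (env3 x y c) P <> 0).
Proof.
  destruct (bivar (tob c P)) as [d [Hd H]]. exists d; split; auto.
  intros x Hx. destruct (H x Hx) as [H1|H1]; [left|right]; intros y Hy; rewrite tob_ok; auto.
Qed.

Lemma list_min (Pr : R -> rpoly -> Prop) :
  (forall d d' P, Pr d P -> 0 < d' <= d -> Pr d' P) ->
  (forall P, exists d, 0 < d /\ Pr d P) ->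
  forall l, exists d, 0 < d /\ forall P, In P l -> Pr d P.
Proof.
  intros Hm Hex l. induction l as [|a l IH].
  - exists 1; split; [lra|]. intros P [].
  - destruct IH as [d1 [Hd1 H1]]. destruct (Hex a) as [d2 [Hd2 H2]].
    exists (Rmin d1 d2). split; [apply Rmin_glb_lt; lra|].
    intros P [<-|HP].
    + apply Hm with d2; auto. split; [apply Rmin_glb_lt; lra|apply Rmin_r].
    + apply Hm with d1; auto. split; [apply Rmin_glb_lt; lra|apply Rmin_l].
Qed.

Lemma uni_atoms F c : exists d, 0 < d /\ forall x x', 0 < x < d -> 0 < x' < d ->
  (fholds (env3 x 0 c) F <-> fholds (env3 x' 0 c) F).
Proof.
  destruct (list_min (fun d P => (forall x, 0 < x < d -> peval (env3 x 0 c) P = 0) \/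
   (forall x, 0 < x < d -> peval (env3 x 0 c) P <> 0))) with (l := atoms F) as [d [Hd H]].
  - intros d d' P [H|H] Hd'; [left|right]; intros x Hx; apply H; lra.
  - intros P; apply uni_tame.
  - exists d; split; auto. intros x x' Hx Hx'. apply fholds_atoms. intros P HP.
    destruct (H P HP) as [HZ|HZ].
    + rewrite (HZ x Hx), (HZ x' Hx'). split; tauto.
    + assert (Hcont : forall t, continuity_pt (fun t => peval (env3 t 0 c) P) t).
      { apply peval_cont. intros; apply env3_cont_x. }
      destruct (Rle_or_lt x x') as [Hle|Hlt].
      * apply (sign_const (fun t => peval (env3 t 0 c) P) x x'); auto.
        intros t Ht; apply HZ; lra.
      * assert (same_sign (peval (env3 x' 0 c) P) (peval (env3 x 0 c) P)).
        { apply (sign_const (fun t => peval (env3 t 0 c) P) x' x); auto. lra.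
          intros t Ht; apply HZ; lra. }
        unfold same_sign in *; tauto.
Qed.

Lemma bi_atoms F c : exists d, 0 < d /\ forall x y y', 0 < x < d ->
  0 < y <= E x -> 0 < y' <= E x ->
  (fholds (env3 x y c) F <-> fholds (env3 x y' c) F).
Proof.
  destruct (list_min (fun d P => forall x, 0 < x < d ->
  (forall y, 0 <= y <= E x -> peval (env3 x y c) P = 0) \/
  (forall y, 0 < y <= E x -> peval (env3 x y c) P <> 0))) with (l := atoms F) as [d [Hd H]].
  - intros d d' P H Hd' x Hx; apply H; lra.
  - intros P; apply bi_tame.
  - exists d; split; auto. intros x y y' Hx Hy Hy'. apply fholds_atoms. intros P HP.
    destruct (H P HP x Hx) as [HZ|HZ].
    + rewrite (HZ y ltac:(lra)), (HZ y' ltac:(lra)). split; tauto.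
    + assert (Hcont : forall t, continuity_pt (fun t => peval (env3 x t c) P) t).
      { apply peval_cont. intros; apply env3_cont_y. }
      destruct (Rle_or_lt y y') as [Hle|Hlt].
      * apply (sign_const (fun t => peval (env3 x t c) P) y y'); auto.
        intros t Ht; apply HZ; lra.
      * assert (same_sign (peval (env3 x y' c) P) (peval (env3 x y c) P)).
        { apply (sign_const (fun t => peval (env3 x t c) P) y' y); auto. lra.
          intros t Ht; apply HZ; lra. }
        unfold same_sign in *; tauto.
Qed.

Lemma inM_iff x y : inM (x, y) <-> 0 < x * x + y * y.
Proof. unfold inM. split; intros H.
  - destruct (Req_dec x 0); destruct (Req_dec y 0); try nra. subst; congruence.
  - intro HH; inversion HH; subst; lra. Qed.

Definition pM : rpoly := PAdd (PMul (PVar 0) (PVar 0)) (PMul (PVar 1) (PVar 1)).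

Lemma graph f : is_Sstar f -> exists F, forall x y z,
  fholds (env3 x y z) F <-> inM (x, y) /\ z = f (x, y).
Proof. intros [_ [_ [F H]]]. exists F. exact H. Qed.

Lemma cst_S c : is_Sstar (fun _ => c).
Proof. split; [|split].
  - exists (Rabs c); intros; lra.
  - intros p Hp eps He. exists 1; split; [lra|]. intros. unfold Rminus; rewrite Rplus_opp_r, Rabs_R0; lra.
  - exists (FAnd (FPos pM) (FZero (PAdd (PVar 2) (POpp (PConst c))))).
    intros x y z; simpl. rewrite inM_iff. split; intros [H1 H2]; split; auto; lra.
Qed.
Definition cst (c : R) : SM := exist _ _ (cst_S c).

Fixpoint rsub (c : R) (P : rpoly) : rpoly :=
  match P with
  | PVar 2 => PAdd (PConst c) (POpp (PVar 2))
  | PVar i => PVar i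
  | PConst r => PConst r
  | PAdd p q => PAdd (rsub c p) (rsub c q)
  | PMul p q => PMul (rsub c p) (rsub c q)
  | POpp p => POpp (rsub c p) end.
Fixpoint fsub (c : R) (F : sa_formula) : sa_formula :=
  match F with
  | FPos p => FPos (rsub c p) | FZero p => FZero (rsub c p)
  | FAnd F G => FAnd (fsub c F) (fsub c G) | FOr F G => FOr (fsub c F) (fsub c G)
  | FNot F => FNot (fsub c F) end.
Lemma rsub_ok c P x y z : peval (env3 x y z) (rsub c P) = peval (env3 x y (c - z)) P.
Proof. induction P; simpl; try congruence.
  destruct n as [|[|[|n]]]; simpl; auto. Qed.
Lemma fsub_ok c F x y z : fholds (env3 x y z) (fsub c F) <-> fholds (env3 x y (c - z)) F.
Proof. induction F; simpl; rewrite ?rsub_ok; try tauto. Qed.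

Lemma csub_S c (f : SM) : is_Sstar (fun p => c - proj1_sig f p).
Proof. destruct f as [f [[B HB] [Hc [F HF]]]]; simpl. split; [|split].
  - exists (Rabs c + B). intros p Hp. specialize (HB p Hp).
    eapply Rle_trans; [apply Rabs_triang|]. rewrite Rabs_Ropp; lra.
  - intros p Hp eps He. destruct (Hc p Hp eps He) as [d [Hd H]]. exists d; split; auto.
    intros q Hq Hd'. specialize (H q Hq Hd').
    replace (c - f q - (c - f p)) with (- (f q - f p)) by ring. rewrite Rabs_Ropp; auto.
  - exists (fsub c F). intros x y z. rewrite fsub_ok, HF. split; intros [H1 H2]; split; auto; lra.
Qed.
Definition csub (c : R) (f : SM) : SM := exist _ _ (csub_S c f).

Lemma ev_cst c p : ev (cst c) p = c. Proof. reflexivity. Qed.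
Lemma ev_csub c f p : ev (csub c f) p = c - ev f p. Proof. reflexivity. Qed.

Definition f0fun (p : R * R) : R := 5 * (snd p * snd p) / (fst p * fst p + snd p * snd p).

Lemma f0_cont_coq p : inM p -> continuous f0fun p.
Proof.
  destruct p as [x y]. rewrite inM_iff. intros Hp.
  assert (Hfst : continuous (fun p : R * R => fst p) (x, y)) by apply continuous_fst.
  assert (Hsnd : continuous (fun p : R * R => snd p) (x, y)) by apply continuous_snd.
  assert (HD : continuous (fun p : R * R => fst p * fst p + snd p * snd p) (x, y)).
  { apply continuous_ext with (f := fun p : R * R => plus (mult (fst p) (fst p)) (mult (snd p) (snd p))).
    intros; reflexivity.
    assert (H1 : continuous (fun p : R * R => mult (fst p) (fst p)) (x, y)) by exact (continuous_mult _ _ _ Hfst Hfst).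
    assert (H2 : continuous (fun p : R * R => mult (snd p) (snd p)) (x, y)) by exact (continuous_mult _ _ _ Hsnd Hsnd).
    exact (@continuous_plus _ R_AbsRing R_NormedModule _ _ _ H1 H2). }
  assert (HI : continuous (fun p : R * R => / (fst p * fst p + snd p * snd p)) (x, y)).
  { apply continuous_comp with (g := Rinv) (f := fun p : R * R => fst p * fst p + snd p * snd p); auto.
    apply continuous_Rinv. simpl. lra. }
  assert (HN : continuous (fun p : R * R => 5 * (snd p * snd p)) (x, y)).
  { apply continuous_ext with (f := fun p : R * R => mult 5 (mult (snd p) (snd p))).
    intros; reflexivity.
    exact (continuous_mult _ _ _ (continuous_const (5:R) (x,y)) (continuous_mult _ _ _ Hsnd Hsnd)). }
  unfold f0fun.
  apply continuous_ext with (f := fun p : R * R => mult (5 * (snd p * snd p)) (/ (fst p * fst p + snd p * snd p))).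
  intros; reflexivity. exact (continuous_mult _ _ _ HN HI).
Qed.

Lemma coq_to_sa (f : R * R -> R) : (forall p, inM p -> continuous f p) -> sa_continuous f.
Proof.
  intros H p Hp eps He. specialize (H p Hp).
  assert (HL := H (ball (f p) eps) (locally_ball (f p) (mkposreal eps He))).
  destruct HL as [d Hd]. exists d. split; [apply cond_pos|].
  intros q Hq Hdist. specialize (Hd q).
  assert (Hb : ball p d q).
  { destruct p as [a b]; destruct q as [a' b']; simpl in Hdist.
    pose proof (cond_pos d).
    pose proof (Rle_0_sqr (b' - b)). pose proof (Rle_0_sqr (a' - a)). unfold Rsqr in *.
    assert (Ha : Rabs (a' + - a) < Rabs d) by (apply Rsqr_lt_abs_0; unfold Rsqr; nra).
    assert (Hb : Rabs (b' + - b) < Rabs d) by (apply Rsqr_lt_abs_0; unfold Rsqr; nra).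
    rewrite (Rabs_pos_eq d) in Ha, Hb by lra.
    split; [change (Rabs (a' + - a) < d) | change (Rabs (b' + - b) < d)]; auto. }
  specialize (Hd Hb). change (Rabs (f q + - f p) < eps) in Hd. exact Hd.
Qed.

Lemma f0_S : is_Sstar f0fun.
Proof. split; [|split].
  - exists 5. intros [x y] Hp. rewrite inM_iff in Hp. unfold f0fun; simpl.
    rewrite Rabs_pos_eq.
    + apply Rmult_le_reg_r with (x * x + y * y); auto. unfold Rdiv.
      rewrite Rmult_assoc, Rinv_l by lra. nra.
    + apply Rmult_le_pos; [nra| left; apply Rinv_0_lt_compat; lra].
  - apply coq_to_sa. apply f0_cont_coq.
  - exists (FAnd (FPos pM) (FZero (PAdd (PMul (PVar 2) pM)
            (POpp (PMul (PConst 5) (PMul (PVar 1) (PVar 1))))))).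
    intros x y z; simpl. rewrite inM_iff. unfold f0fun; simpl. split; intros [H1 H2]; split; auto.
    + apply Rmult_eq_reg_r with (x * x + y * y); [|lra]. field_simplify; lra.
    + rewrite H2. field. lra.
Qed.
Definition f0 : SM := exist _ _ f0_S.

Lemma f0_B x : x <> 0 -> ev f0 (x, 0) = 0.
Proof. intros. unfold ev, f0, f0fun; simpl. field. nra. Qed.
Lemma f0_A x : x <> 0 -> ev f0 (x, x / 2) = 1.
Proof. intros. unfold ev, f0, f0fun; simpl. field. nra. Qed.

Lemma sm_cont_y (f : SM) x : x <> 0 -> continuity (fun t => ev f (x, t)).
Proof.
  intros Hx t. destruct f as [f [HB0 [Hc HG0]]]. unfold ev; simpl.
  unfold continuity_pt, continue_in, limit1_in, limit_in; simpl; unfold R_dist.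
  intros eps He. assert (HM : inM (x, t)) by (rewrite inM_iff; nra).
  destruct (Hc _ HM eps He) as [d [Hd H]]. exists d; split; auto.
  intros t' [_ Ht']. apply H. rewrite inM_iff; nra. simpl.
  apply Rabs_def2 in Ht'. nra.
Qed.
Lemma sm_cont_x (f : SM) x : x <> 0 -> continuity_pt (fun t => ev f (t, 0)) x.
Proof.
  intros Hx. destruct f as [f [HB0 [Hc HG0]]]. unfold ev; simpl.
  unfold continuity_pt, continue_in, limit1_in, limit_in; simpl; unfold R_dist.
  intros eps He. assert (HM : inM (x, 0)) by (rewrite inM_iff; nra).
  destruct (Hc _ HM eps He) as [d [Hd H]]. exists (Rmin d (Rabs x)); split.
  { apply Rmin_glb_lt; auto. apply Rabs_pos_lt; auto. }
  intros t' [_ Ht']. 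
  assert (H1 : Rabs (t' - x) < d) by (eapply Rlt_le_trans; [apply Ht'|apply Rmin_l]).
  assert (H2 : Rabs (t' - x) < Rabs x) by (eapply Rlt_le_trans; [apply Ht'|apply Rmin_r]).
  apply H.
  - rewrite inM_iff. destruct (Req_dec t' 0); [|nra]. subst. rewrite Rminus_0_l, Rabs_Ropp in H2; lra.
  - simpl. apply Rabs_def2 in H1. nra.
Qed.

Definition tends (f : SM) (l : R) := forall eps, 0 < eps -> exists d, 0 < d /\
  forall x, 0 < x < d -> Rabs (ev f (x, 0) - l) < eps.

Lemma ev_graph (f : SM) : exists F, forall x y z,
  fholds (env3 x y z) F <-> inM (x, y) /\ z = ev f (x, y).
Proof. apply graph. exact (proj2_sig f). Qed.

Lemma inM_x x y : x <> 0 -> inM (x, y).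
Proof. intros. rewrite inM_iff. nra. Qed.

Lemma h_side (f : SM) c d : (forall x, 0 < x < d -> ev f (x, 0) <> c) ->
  forall x x', 0 < x < d -> 0 < x' < d -> same_sign (ev f (x, 0) - c) (ev f (x', 0) - c).
Proof.
  intros H x x' Hx Hx'.
  assert (Hc : forall t, 0 < t -> continuity_pt (fun t => ev f (t, 0) - c) t).
  { intros t Ht. apply continuity_pt_minus. apply sm_cont_x; lra. apply continuity_pt_const. intros a b; reflexivity. }
  destruct (Rle_or_lt x x') as [Hle|Hlt].
  - apply (sign_const (fun t => ev f (t, 0) - c)); auto.
    + intros t Ht; apply Hc; lra.
    + intros t Ht. specialize (H t ltac:(lra)). lra.
  - assert (same_sign (ev f (x', 0) - c) (ev f (x, 0) - c)).
    { apply (sign_const (fun t => ev f (t, 0) - c)); try lra.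
      + intros t Ht; apply Hc; lra.
      + intros t Ht. specialize (H t ltac:(lra)). lra. }
    unfold same_sign in *; tauto.
Qed.

Lemma step (f : SM) c : exists d, 0 < d /\
  ((forall x, 0 < x < d -> ev f (x, 0) = c) \/ (forall x, 0 < x < d -> ev f (x, 0) < c) \/
   (forall x, 0 < x < d -> c < ev f (x, 0))).
Proof.
  destruct (ev_graph f) as [F HF]. destruct (uni_atoms F c) as [d [Hd H]].
  exists d; split; auto.
  assert (Heq : forall x x', 0 < x < d -> 0 < x' < d -> (c = ev f (x, 0) <-> c = ev f (x', 0))).
  { intros x x' Hx Hx'. specialize (H x x' Hx Hx'). rewrite !HF in H.
    assert (inM (x, 0)) by (apply inM_x; lra). assert (inM (x', 0)) by (apply inM_x; lra). tauto. }
  set (x0 := d / 2). assert (Hx0 : 0 < x0 < d) by (unfold x0; lra).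
  destruct (Req_dec (ev f (x0, 0)) c) as [E0|E0].
  - left. intros x Hx. symmetry. apply (Heq x0 x Hx0 Hx). auto.
  - assert (Hne : forall x, 0 < x < d -> ev f (x, 0) <> c).
    { intros x Hx HH. apply E0. symmetry. apply (Heq x x0 Hx Hx0). auto. }
    right. destruct (Rlt_or_le (ev f (x0, 0)) c) as [Hl|Hl].
    + left. intros x Hx. destruct (h_side f c d Hne x x0 Hx Hx0) as [S1 S2].
      specialize (Hne x Hx). destruct (Rlt_or_le (ev f (x, 0)) c); auto.
      assert (0 < ev f (x, 0) - c) by lra. apply S1 in H1. lra.
    + right. intros x Hx. destruct (h_side f c d Hne x x0 Hx Hx0) as [S1 S2].
      specialize (Hne x Hx). destruct (Rlt_or_le c (ev f (x, 0))); auto.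
      assert (0 < ev f (x0, 0) - c) by lra. apply S1 in H1. lra.
Qed.

Lemma abs_le x a : Rabs x <= a -> - a <= x <= a.
Proof. unfold Rabs; destruct (Rcase_abs x); lra. Qed.
Lemma abs_lt x a : - a < x < a -> Rabs x < a.
Proof. unfold Rabs; destruct (Rcase_abs x); lra. Qed.

Lemma sm_bounded (f : SM) : exists B, forall p, inM p -> Rabs (ev f p) <= B.
Proof. exact (proj1 (proj2_sig f)). Qed.

Lemma lim_exists (f : SM) : exists l, tends f l.
Proof.
  destruct (sm_bounded f) as [B HB].
  set (S := fun c => exists d, 0 < d /\ forall x, 0 < x < d -> c < ev f (x, 0)).
  assert (Hbnd : bound S).
  { exists B. intros c [d [Hd H]]. specialize (H (d/2) ltac:(lra)).
    specialize (HB (d/2, 0) ltac:(apply inM_x; lra)). apply abs_le in HB. lra. }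
  assert (Hne : exists c, S c).
  { exists (- B - 1). exists 1. split; [lra|]. intros x Hx.
    specialize (HB (x, 0) ltac:(apply inM_x; lra)). apply abs_le in HB.
    pose proof (Rabs_pos (ev f (x,0))). lra. }
  destruct (completeness S Hbnd Hne) as [l [Hub Hlub]].
  exists l. intros eps He.
  assert (Hlow : exists d, 0 < d /\ forall x, 0 < x < d -> l - eps < ev f (x, 0)).
  { destruct (classic (exists c, S c /\ l - eps < c)) as [[c [[d [Hd H]] Hc]]|Hn].
    - exists d; split; auto. intros x Hx. specialize (H x Hx). lra.
    - exfalso. assert (is_upper_bound S (l - eps)).
      { intros c Hc. destruct (Rle_or_lt c (l - eps)); auto. exfalso. apply Hn. eauto. }
      specialize (Hlub _ H). lra. }
  destruct Hlow as [d1 [Hd1 H1]].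
  destruct (step f (l + eps / 2)) as [d2 [Hd2 [H2|[H2|H2]]]].
  - exists (Rmin d1 d2). split; [apply Rmin_glb_lt; lra|]. intros x Hx.
    assert (x < d1) by (eapply Rlt_le_trans; [apply Hx|apply Rmin_l]).
    assert (x < d2) by (eapply Rlt_le_trans; [apply Hx|apply Rmin_r]).
    specialize (H1 x ltac:(lra)). specialize (H2 x ltac:(lra)). apply abs_lt. lra.
  - exists (Rmin d1 d2). split; [apply Rmin_glb_lt; lra|]. intros x Hx.
    assert (x < d1) by (eapply Rlt_le_trans; [apply Hx|apply Rmin_l]).
    assert (x < d2) by (eapply Rlt_le_trans; [apply Hx|apply Rmin_r]).
    specialize (H1 x ltac:(lra)). specialize (H2 x ltac:(lra)). apply abs_lt. lra.
  - exfalso. assert (S (l + eps / 2)) by (exists d2; split; auto).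
    specialize (Hub _ H). lra.
Qed.

Section Gen.
Variable Rel : SM -> R -> Prop.
Hypothesis Rtot : forall f, exists l, Rel f l.
Hypothesis Runi : forall f a b, Rel f a -> Rel f b -> a = b.
Hypothesis Rcst : forall h c, (forall p, inM p -> ev h p = c) -> Rel h c.
Hypothesis Radd : forall f g h, Rel f 0 -> Rel g 0 ->
  (forall p, inM p -> ev h p = ev f p + ev g p) -> Rel h 0.
Hypothesis Rmul : forall f g h, Rel f 0 ->
  (forall p, inM p -> ev h p = ev g p * ev f p) -> Rel h 0.
Hypothesis Rsub : forall f a c, Rel f a -> Rel (csub c f) (c - a).

Lemma max_from_rel : is_maximal_ideal (fun f => Rel f 0).
Proof.
  split; [|split].
  - split; [|split].
    + intros z Hz. apply Rcst; auto.
    + intros f g h Hf Hg Hh. apply (Radd f g h); auto.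
    + intros f g h Hf Hh. apply (Rmul f g h); auto.
  - intros u Hu H0. assert (H1 := Rcst u 1 Hu). specialize (Runi _ _ _ H0 H1). lra.
  - intros J [Jz [Ja Jm]] Jp Hsub f Jf. destruct (Rtot f) as [l Hl].
    destruct (Req_dec l 0) as [->|Hl0]; auto. exfalso.
    assert (Hk : Rel (csub l f) 0). { replace 0 with (l - l) by ring. apply Rsub; auto. }
    assert (Jh : J (cst l)).
    { apply (Ja f (csub l f)); auto. intros p _. rewrite ev_cst, ev_csub. ring. }
    assert (Ju : J (cst 1)).
    { apply (Jm (cst l) (cst (/ l))); auto. intros p _. rewrite !ev_cst. field; auto. }
    apply (Jp (cst 1)); auto.
Qed.
End Gen.

Definition pt_rel (a : R * R) (f : SM) (l : R) := ev f a = l.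
Lemma pt_max a : inM a -> is_maximal_ideal (fun f => pt_rel a f 0).
Proof.
  intros Ha. apply max_from_rel; unfold pt_rel.
  - intros f; eauto.
  - intros; subst; auto.
  - intros; auto.
  - intros f g h Hf Hg Hh. rewrite Hh, Hf, Hg; auto; ring.
  - intros f g h Hf Hh. rewrite Hh, Hf; auto; ring.
  - intros f a' c H. rewrite ev_csub, H. reflexivity.
Qed.
Definition pt (a : R * R) (Ha : inM a) : betaM := exist _ _ (pt_max a Ha).
Lemma mem_pt a Ha f : mem (pt a Ha) f <-> ev f a = 0.
Proof. unfold mem, pt, pt_rel; simpl. tauto. Qed.

Lemma tends_max : is_maximal_ideal (fun f => tends f 0).
Proof.
  apply max_from_rel.
  - apply lim_exists.
  - intros f a b Ha Hb. destruct (Req_dec a b) as [|Hne]; auto. exfalso.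
    set (e := Rabs (a - b) / 2). assert (He : 0 < e) by (unfold e; assert (0 < Rabs (a - b)) by (apply Rabs_pos_lt; lra); lra).
    destruct (Ha e He) as [d1 [Hd1 H1]]. destruct (Hb e He) as [d2 [Hd2 H2]].
    set (x := Rmin d1 d2 / 2). assert (Hm : 0 < Rmin d1 d2) by (apply Rmin_glb_lt; lra).
    assert (Hm1 := Rmin_l d1 d2). assert (Hm2 := Rmin_r d1 d2).
    specialize (H1 x ltac:(unfold x; lra)). specialize (H2 x ltac:(unfold x; lra)).
    assert (Rabs (a - b) <= Rabs (ev f (x, 0) - a) + Rabs (ev f (x, 0) - b)).
    { replace (a - b) with (- (ev f (x, 0) - a) + (ev f (x, 0) - b)) by ring.
      eapply Rle_trans; [apply Rabs_triang|]. rewrite Rabs_Ropp. lra. }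
    unfold e in *. lra.
  - intros h c Hh eps He. exists 1; split; [lra|]. intros x Hx. rewrite Hh by (apply inM_x; lra).
    unfold Rminus; rewrite Rplus_opp_r, Rabs_R0; lra.
  - intros f g h Hf Hg Hh eps He. destruct (Hf (eps/2) ltac:(lra)) as [d1 [Hd1 H1]].
    destruct (Hg (eps/2) ltac:(lra)) as [d2 [Hd2 H2]].
    exists (Rmin d1 d2). split; [apply Rmin_glb_lt; lra|]. intros x Hx.
    assert (x < d1) by (eapply Rlt_le_trans; [apply Hx|apply Rmin_l]).
    assert (x < d2) by (eapply Rlt_le_trans; [apply Hx|apply Rmin_r]).
    specialize (H1 x ltac:(lra)). specialize (H2 x ltac:(lra)).
    rewrite Hh by (apply inM_x; lra). rewrite Rminus_0_r in *.
    eapply Rle_lt_trans; [apply Rabs_triang|]. lra.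
  - intros f g h Hf Hh eps He. destruct (sm_bounded g) as [B HB].
    assert (HB' : 0 <= B). { specialize (HB (1,0) ltac:(apply inM_x; lra)). pose proof (Rabs_pos (ev g (1,0))). lra. }
    destruct (Hf (eps / (B + 1)) ltac:(apply Rdiv_lt_0_compat; lra)) as [d [Hd H]].
    exists d; split; auto. intros x Hx. specialize (H x Hx). rewrite Rminus_0_r in *.
    rewrite Hh by (apply inM_x; lra). rewrite Rabs_mult.
    specialize (HB (x, 0) ltac:(apply inM_x; lra)).
    assert (Rabs (ev f (x, 0)) * (B + 1) < eps).
    { apply (Rmult_lt_compat_r (B + 1)) in H; [|lra]. unfold Rdiv in H.
      rewrite Rmult_assoc, Rinv_l in H; lra. }
    pose proof (Rabs_pos (ev f (x, 0))). pose proof (Rabs_pos (ev g (x, 0))). nra.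
  - intros f a c H eps He. destruct (H eps He) as [d [Hd H1]]. exists d; split; auto.
    intros x Hx. rewrite ev_csub. replace (c - ev f (x, 0) - (c - a)) with (- (ev f (x, 0) - a)) by ring.
    rewrite Rabs_Ropp; auto.
Qed.
Definition mstar : betaM := exist _ _ tends_max.
Lemma mem_mstar f : mem mstar f <-> tends f 0.
Proof. unfold mem, mstar; simpl. tauto. Qed.

Lemma crux (g : SM) : (forall x, 0 < x < 1 -> ev g (x, E x) = 0) -> tends g 0.
Proof.
  intros Hg. destruct (lim_exists g) as [l Hl].
  destruct (Req_dec l 0) as [->|Hl0]; auto. exfalso.
  set (c := l / 2).
  destruct (ev_graph g) as [F HF]. destruct (bi_atoms F c) as [d1 [Hd1 H1]].
  assert (Hal : 0 < Rabs l) by (apply Rabs_pos_lt; auto).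
  destruct (Hl (Rabs l / 2) ltac:(lra)) as [d2 [Hd2 H2]].
  set (x := Rmin 1 (Rmin d1 d2) / 2).
  assert (Hm : 0 < Rmin 1 (Rmin d1 d2)) by (repeat apply Rmin_glb_lt; lra).
  assert (Hm0 := Rmin_l 1 (Rmin d1 d2)). assert (Hm' := Rmin_r 1 (Rmin d1 d2)).
  assert (Hm1 := Rmin_l d1 d2). assert (Hm2 := Rmin_r d1 d2).
  assert (Hx : 0 < x) by (unfold x; lra).
  specialize (H2 x ltac:(unfold x; lra)). specialize (Hg x ltac:(unfold x; lra)).
  assert (HE := E_pos x).
  set (u := fun t => l * (c - ev g (x, t))).
  assert (Hu0 : u 0 < 0).
  { unfold u, c; cbv beta. destruct (Rlt_or_le 0 l).
    - rewrite (Rabs_pos_eq l) in H2 by lra. apply Rabs_def2 in H2. nra.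
    - rewrite (Rabs_left1 l) in H2 by lra. apply Rabs_def2 in H2. nra. }
  assert (HuE : 0 < u (E x)). { unfold u, c; cbv beta. rewrite Hg. nra. }
  assert (Hcu : continuity u).
  { unfold u. apply continuity_mult. apply continuity_const; intros a b; reflexivity.
    apply continuity_minus. apply continuity_const; intros a b; reflexivity.
    apply sm_cont_y; lra. }
  destruct (IVT u 0 (E x) Hcu HE Hu0 HuE) as [z [Hz Huz]].
  assert (Hz0 : z <> 0). { intro; subst; lra. }
  assert (Hgz : ev g (x, z) = c).
  { unfold u in Huz. apply Rmult_integral in Huz. destruct Huz; [lra|]. lra. }
  assert (Hfz : fholds (env3 x z c) F). { apply HF. split; auto. apply inM_x; lra. }
  assert (Hx1 : 0 < x < d1) by (unfold x; lra).
  rewrite (H1 x z (E x) Hx1 ltac:(lra) ltac:(lra)) in Hfz.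
  apply HF in Hfz. destruct Hfz as [_ Hfz]. rewrite Hg in Hfz. unfold c in Hfz. lra.
Qed.

Lemma betaM_eq (m m' : betaM) : (forall f, mem m f <-> mem m' f) -> m = m'.
Proof.
  destruct m as [I HI], m' as [I' HI']; unfold mem; simpl. intros H.
  assert (I = I') by (apply functional_extensionality; intros f; apply propositional_extensionality; auto).
  subst. f_equal. apply proof_irrelevance.
Qed.

Lemma phi_B x : phi (x, 0) = (x, 0).
Proof. unfold phi. destruct (Rle_dec 0 0); [reflexivity| lra]. Qed.

Lemma phi_A x : 0 < x -> phi (x, x / 2) = (x, E x).
Proof. intros Hx. unfold phi, E.
  destruct (Rle_dec (x / 2) 0); [lra|]. destruct (Rle_dec x (x / 2)); [lra|].
  destruct (Rle_dec (x / 2) (x / 2)); [|lra]. f_equal. field. lra. Qed.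

Theorem mainTheorem15 :
  ~ exists F : betaM -> betaM, zar_homeomorphism F /\ extends_phi F.
Proof.
  intros [F [[G [HGF [HFG [cF cG]]]] Hext]].
  assert (G_pt : forall a Ha b Hb, phi a = b -> G (pt b Hb) = pt a Ha).
  { intros a Ha b Hb Hab. rewrite <- (HGF (pt a Ha)). f_equal. apply betaM_eq. intros f.
    rewrite mem_pt. rewrite (Hext a Ha (pt a Ha) (mem_pt a Ha)). rewrite Hab. tauto. }
  set (n := G mstar).
  assert (Hnmax := proj2_sig n). destruct Hnmax as [[_ [Nadd _]] [Nprop _]].
  assert (Hboth : ~ (mem n f0 /\ mem n (csub 1 f0))).
  { intros [H1 H2]. apply (Nprop (cst 1)). reflexivity.
    apply (Nadd f0 (csub 1 f0) (cst 1)); auto. intros p _. rewrite ev_cst, ev_csub. ring. }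
  assert (Hopen : forall k, Dset k n -> exists g, Dset g mstar /\ forall m', Dset g m' -> Dset k (G m')).
  { intros k Hk. assert (Ho : zar_open (Dset k)) by (intros m Hm; exists k; split; auto).
    destruct (cG _ Ho mstar Hk) as [g [Hg1 Hg2]]. exists g; split; auto. }
  destruct (classic (mem n f0)) as [Hf0|Hf0].
  - assert (Hk : Dset (csub 1 f0) n) by (intro; apply Hboth; auto).
    destruct (Hopen _ Hk) as [g [Hg1 Hg2]].
    assert (Hx : exists x, 0 < x < 1 /\ ev g (x, E x) <> 0).
    { apply NNPP. intro Hn. apply Hg1. apply mem_mstar. apply crux.
      intros x Hx. apply NNPP. intro. apply Hn. eauto. }
    destruct Hx as [x [Hx Hgx]].
    assert (Hb : inM (x, E x)) by (apply inM_x; lra).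
    assert (Ha : inM (x, x / 2)) by (apply inM_x; lra).
    specialize (Hg2 (pt _ Hb)). unfold Dset in Hg2. rewrite mem_pt in Hg2.
    specialize (Hg2 Hgx). rewrite (G_pt _ Ha _ Hb (phi_A x ltac:(lra))) in Hg2.
    apply Hg2. apply mem_pt. rewrite ev_csub, f0_A by lra. ring.
  - destruct (Hopen _ Hf0) as [g [Hg1 Hg2]].
    assert (Hx : exists x, 0 < x < 1 /\ ev g (x, 0) <> 0).
    { apply NNPP. intro Hn. apply Hg1. apply mem_mstar. intros eps He.
      exists 1; split; [lra|]. intros x Hx.
      assert (ev g (x, 0) = 0) by (apply NNPP; intro; apply Hn; eauto).
      rewrite H, Rminus_0_r, Rabs_R0; lra. }
    destruct (Hx) as [x [Hx1 Hgx]].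
    assert (Hb : inM (x, 0)) by (apply inM_x; lra).
    specialize (Hg2 (pt _ Hb)). unfold Dset in Hg2. rewrite mem_pt in Hg2.
    specialize (Hg2 Hgx). rewrite (G_pt _ Hb _ Hb (phi_B x)) in Hg2.
    apply Hg2. apply mem_pt. apply f0_B. lra.
Qed.
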